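(* Let $G$ be a graph of minimum degree $\delta$ and order $n$, and let $w=(w_0,\dots,w_l)$ with $w_0$ a positive integer, $w_1,\dots,w_l$ nonnegative integers and $w_0\ge\cdots\ge w_l$. Then: (i) If there exists $i\in\{1,\dots,l-1\}$ with $i\delta\ge w_i$, then $\gamma_{(w_0,\dots,w_l)}(G)\le\gamma_{(w_0,\dots,w_i)}(G)$. (ii) If $l\ge i+1\ge w_0$, then $\gamma_{(w_0,\dots,w_i,0,\dots,0)}(G)\le (i+1)\gamma(G)$ (where the vector has length $l+1$). (iii) Let $k,i$ be positive integers with $l\ge ki$, and let $(w'_0,w'_1,\dots,w'_i)$ with $w'_0$ a positive integer and $w'_1,\dots,w'_i$ nonnegative integers. If $i\delta\ge w'_i$ and $w_{kj}=kw'_j$ for every $j\in\{0,1,\dots,i\}$, then $\gamma_{(w_0,\dots,w_l)}(G)\le k\,\gamma_{(w'_0,\dots,w'_i)}(G)$. (iv) Let $k$ and $\beta_1,\dots,\beta_k$ be positive integers. If $l\delta\ge k+w_l>k$ and $w_0+k\ge\beta_1\ge\cdots\ge\beta_k\ge w_1+k$, then $\gamma_{(w_0+k,\beta_1,\dots,\beta_k,w_1+k,\dots,w_l+k)}(G)\le\gamma_{(w_0,\dots,w_l)}(G)+k\bigl(n-\nu_{(w_0,\dots,w_l)}(G)\bigr)$. (v) If $l\delta\ge w_l\ge l\ge 2$, then $\gamma_{(w_0,\dots,w_l)}(G)\le l\,\gamma_{(w_0-l+1,\,w_l-l+1)}(G)$. (vi) If $\delta\ge1$, $w_0\le l-1$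 and $w_{l-1}\ge1$, then $\gamma_{(w_0,\dots,w_{l-2},1)}(G)\le\gamma_{(w_0,\dots,w_{l-1},0)}(G)$.
   Context: All graphs are finite and simple; $N(v)$ denotes the open neighbourhood. For a vector $w=(w_0,\dots,w_l)$ of nonnegative integers with $w_0\ge1$, a function $f:V(G)\to\{0,\dots,l\}$ is a $w$-dominating function if $\sum_{u\in N(v)}f(u)\ge w_i$ for every vertex $v$ with $f(v)=i$; we write $V_i=\{v:f(v)=i\}$. The weight is $\omega(f)=\sum_v f(v)$, and $\gamma_w(G)=\gamma_{(w_0,\dots,w_l)}(G)$ is the minimum weight of a $w$-dominating function on $G$; a $w$-dominating function of weight $\gamma_w(G)$ is a $\gamma_w(G)$-function. $\nu_{(w_0,\dots,w_l)}(G)=\max\{|V_0| : f(V_0,\dots,V_l) \text{ is a } \gamma_{(w_0,\dots,w_l)}(G)\text{-function}\}$. $\gamma(G)$ is the domination number. *)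

(* Defs.v *)
(* Simple graph = symmetric irreflexive relation e on a finType T. *)
From mathcomp Require Import all_boot.
Set Implicit Arguments. Unset Strict Implicit. Unset Printing Implicit Defensive.

Section WDom.
Variables (T : finType) (e : rel T).

Definition nbhd (v : T) : {set T} := [set u | e v u].

(* minimum degree delta(G) (0 for the empty graph) *)
Definition mindeg : nat := \big[minn/#|T|]_(v : T) #|nbhd v|.

Definition dominating_set (D : {set T}) : bool :=
  [forall v : T, (v \in D) || [exists u in D, e v u]].
Definition domnum : nat := \big[minn/#|T|]_(D : {set T} | dominating_set D) #|D|.

(* w = (w_0,...,w_l) is a list of length l+1; functions take values in
   {0,...,l} = 'I_(size w). *)
Definition wdom (w : seq nat) (f : {ffun T -> 'I_(size w)}) : bool :=
  [forall v : T, nth 0 w (f v) <= \sum_(u in nbhd v) (f u : nat)].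

Definition weight (w : seq nat) (f : {ffun T -> 'I_(size w)}) : nat :=
  \sum_(v : T) (f v : nat).

(* gamma_w(G): minimum weight of a w-dominating function.  If no
   w-dominating function exists the value is the sentinel #|T| * size w,
   which is strictly larger than the weight of any function. *)
Definition gammaw (w : seq nat) : nat :=
  \big[minn/(#|T| * size w)]_(f : {ffun T -> 'I_(size w)} | wdom f) weight f.

Definition V0 (w : seq nat) (f : {ffun T -> 'I_(size w)}) : {set T} :=
  [set v | (f v : nat) == 0].

Definition nuw (w : seq nat) : nat :=
  \max_(f : {ffun T -> 'I_(size w)} | wdom f && (weight f == gammaw w)) #|V0 f|.

End WDom.

(* Main.v *)
Require Import Defs.
From mathcomp Require Import all_boot zify.
Set Implicit Arguments. Unset Strict Implicit. Unset Printing Implicit Defensive.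

Lemma bigmin_le (I : finType) (P : pred I) (F : I -> nat) x i0 :
  P i0 -> \big[minn/x]_(i | P i) F i <= F i0.
Proof.
move=> Pi0; rewrite -big_filter.
have : i0 \in [seq i <- index_enum I | P i] by rewrite mem_filter Pi0 mem_index_enum.
elim: (filter _ _) => // a s IH; rewrite inE big_cons => /orP [/eqP->|/IH H].
  exact: geq_minl.
exact: leq_trans (geq_minr _ _) H.
Qed.

Lemma bigmin_ub (I : finType) (P : pred I) (F : I -> nat) x :
  \big[minn/x]_(i | P i) F i <= x.
Proof. by elim/big_rec: _ => // i y _ Hy; rewrite geq_min Hy orbT. Qed.

Lemma bigmin_attained (I : finType) (P : pred I) (F : I -> nat) x :
  (forall i, P i -> F i <= x) -> (exists i, P i) ->
  exists2 i, P i & \big[minn/x]_(i | P i) F i = F i.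
Proof.
move=> Hx [i0 Pi0]; rewrite -big_filter.
have Hne : [seq i <- index_enum I | P i] != [::].
  apply/eqP => E.
  have : i0 \in [seq i <- index_enum I | P i] by rewrite mem_filter Pi0 mem_index_enum.
  by rewrite E.
have : all P [seq i <- index_enum I | P i] by apply: filter_all.
elim: (filter _ _) Hne => // a s IH _ /= /andP [Pa Ps].
case: s IH Ps => [|b s] IH Ps.
  by exists a => //; rewrite big_cons big_nil; apply/minn_idPl/Hx.
have [j Pj Ej] := IH isT Ps.
rewrite big_cons Ej; case: (leqP (F a) (F j)) => H.
  by exists a => //; apply/minn_idPl.
by exists j => //; apply/minn_idPr; apply: ltnW.
Qed.

Lemma weight_ub (T : finType) (w : seq nat) (f : {ffun T -> 'I_(size w)}) :
  weight f <= #|T| * size w.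
Proof.
apply: (@leq_trans (\sum_(v : T) size w)).
  by apply: leq_sum => v _; apply: ltnW.
by rewrite sum_nat_const.
Qed.

Lemma gammaw_ub (T : finType) (e : rel T) w : gammaw e w <= #|T| * size w.
Proof. exact: bigmin_ub. Qed.

Lemma gammaw_cases (T : finType) (e : rel T) w :
  (exists2 f : {ffun T -> 'I_(size w)}, wdom e f & gammaw e w = weight f) \/
  ((forall f : {ffun T -> 'I_(size w)}, ~~ wdom e f) /\ gammaw e w = #|T| * size w).
Proof.
case: (pickP (@wdom _ e w)) => [f0 wf0 | none].
  left; apply: bigmin_attained; last by exists f0.
  by move=> f _; apply: weight_ub.
right; split => [f|]; first by rewrite none.
by rewrite /gammaw big_pred0.
Qed.

Lemma gammaw_le_fun (T : finType) (e : rel T) w (h : T -> nat) :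
  (forall v, h v < size w) ->
  (forall v, nth 0 w (h v) <= \sum_(u in nbhd e v) h u) ->
  gammaw e w <= \sum_v h v.
Proof.
move=> Hlt Hd.
pose f : {ffun T -> 'I_(size w)} := [ffun v => Ordinal (Hlt v)].
have wf : wdom e f.
  apply/forallP => v; rewrite /f ffunE /=.
  under eq_bigr => u _ do rewrite ffunE /=.
  exact: Hd.
apply: leq_trans (bigmin_le _ _ wf) _.
by rewrite /weight; under eq_bigr => v _ do rewrite ffunE.
Qed.

Lemma sum_nbhd_ge (T : finType) (e : rel T) v u (h : T -> nat) :
  e v u -> h u <= \sum_(x in nbhd e v) h x.
Proof. by move=> evu; rewrite (bigD1 u) ?inE //= leq_addr. Qed.

Lemma sum_nbhd_mono (T : finType) (e : rel T) v (f h : T -> nat) :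
  (forall u, e v u -> f u <= h u) ->
  \sum_(x in nbhd e v) f x <= \sum_(x in nbhd e v) h x.
Proof. by move=> H; apply: leq_sum => u; rewrite inE; apply: H. Qed.

Lemma sum_nbhd_pos (T : finType) (e : rel T) v (f : T -> nat) :
  0 < \sum_(x in nbhd e v) f x -> exists2 u, e v u & f u != 0.
Proof.
move=> H; case: (pickP [pred u | e v u && (f u != 0)]) => [u /andP[]|none].
  by exists u.
move: H; rewrite big1 // => u; rewrite inE => evu.
by move: (none u); rewrite /= evu /= => /negbFE/eqP.
Qed.

Lemma mindeg_le (T : finType) (e : rel T) v : mindeg e <= #|nbhd e v|.
Proof. exact: (bigmin_le (P := predT)). Qed.

Lemma sum_ind (T : finType) (A : {set T}) : \sum_v ((v \in A) : nat) = #|A|.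
Proof. by rewrite -sum1_card [RHS]big_mkcond /=; apply: eq_bigr => v _; case: (v \in A). Qed.

Lemma const_dom (T : finType) (e : rel T) w i :
  i < size w -> nth 0 w i <= i * mindeg e -> exists f : {ffun T -> 'I_(size w)}, wdom e f.
Proof.
move=> Hi Hw; exists [ffun _ => Ordinal Hi]; apply/forallP => v; rewrite ffunE /=.
under eq_bigr => u _ do rewrite ffunE /=.
rewrite sum_nat_const (leq_trans Hw) // mulnC leq_mul2r mindeg_le orbT //.
Qed.

Lemma ord_lt n m (x : 'I_n) : n = m -> (x : nat) < m.
Proof. by move=> <-. Qed.

Lemma part1 (T : finType) (e : rel T) l w (size_w : size w = l.+1) i :
  1 <= i -> i <= l - 1 -> nth 0 w i <= i * mindeg e ->
  gammaw e w <= gammaw e (take i.+1 w).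
Proof.
move=> i1 il Hw.
have sz : size (take i.+1 w) = i.+1 by rewrite size_takel // size_w; lia.
case: (gammaw_cases e (take i.+1 w)) => [[f wf ->] | [none _]].
  rewrite /weight; apply: gammaw_le_fun => v.
    by have := ord_lt (f v) sz; rewrite size_w; lia.
  have lt := ord_lt (f v) sz.
  by move/forallP: wf => /(_ v); rewrite nth_take.
exfalso; have [||f wf] := @const_dom _ e (take i.+1 w) i.
- by rewrite sz.
- by rewrite nth_take.
by move: (none f); rewrite wf.
Qed.

Lemma part2 (T : finType) (e : rel T) l w (size_w : size w = l.+1) i :
  i.+1 <= l -> nth 0 w 0 <= i.+1 ->
  gammaw e (take i.+1 w ++ nseq (l - i) 0) <= i.+1 * domnum e.
Proof.
move=> il w0.
have [D dD ->] : exists2 D, dominating_set e D & domnum e = #|D|.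
  apply: bigmin_attained => [D _|]; first exact: max_card.
  by exists setT; apply/forallP => v; rewrite in_setT.
set w2 := _ ++ _.
have sz : size w2 = l.+1 by rewrite size_cat size_nseq size_takel ?size_w; lia.
apply: (@leq_trans (\sum_v (if v \in D then i.+1 else 0))).
  apply: gammaw_le_fun => v.
    by rewrite sz; case: ifP => _; lia.
  case: ifP => vD.
    rewrite /w2 nth_cat size_takel ?size_w ?ltnn ?subnn ?nth_nseq; last lia.
    by case: ifP.
  move/forallP: dD => /(_ v); rewrite vD /= => /exists_inP [u uD evu].
  apply: leq_trans (@sum_nbhd_ge _ _ v u (fun x => if x \in D then i.+1 else 0) evu).
  rewrite uD /w2 nth_cat size_takel ?size_w; last lia.
  by rewrite /= nth_take.
by rewrite -big_mkcond sum_nat_const mulnC.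
Qed.

Lemma part3 (T : finType) (e : rel T) l w (size_w : size w = l.+1)
  (k i : nat) (w' : seq nat) : 0 < k -> 0 < i -> size w' = i.+1 ->
     0 < nth 0 w' 0 -> k * i <= l -> nth 0 w' i <= i * mindeg e ->
     (forall j, j <= i -> nth 0 w (k * j) = k * nth 0 w' j) ->
     gammaw e w <= k * gammaw e w'.
Proof.
move=> k0 i0 sw' _ kil Hw Hk.
case: (gammaw_cases e w') => [[f wf ->] | [none _]].
  rewrite /weight big_distrr /=; apply: gammaw_le_fun => v.
    have lt := ord_lt (f v) sw'; rewrite size_w.
    by rewrite ltnS (leq_trans _ kil) // leq_mul2l -ltnS lt orbT.
  rewrite Hk; last by have := ord_lt (f v) sw'.
  rewrite -big_distrr leq_mul2l /=.
  by move/forallP: wf => /(_ v) ->; rewrite orbT.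
exfalso; have [||f wf] := @const_dom _ e w' i; rewrite ?sw' //.
by move: (none f); rewrite wf.
Qed.

Lemma part5 (T : finType) (e : rel T) l w (size_w : size w = l.+1) :
  l <= nth 0 w l -> 2 <= l ->
  gammaw e w <= l * gammaw e [:: nth 0 w 0 - l + 1; nth 0 w l - l + 1].
Proof.
move=> wl l2.
case: (gammaw_cases e [:: nth 0 w 0 - l + 1; nth 0 w l - l + 1]) => [[g wg ->]|[_ ->]].
  rewrite /weight big_distrr; apply: gammaw_le_fun => v.
    have : (g v : nat) < 2 := ltn_ord (g v).
    by case: (g v : nat) => [|[|]] //= _; rewrite ?muln0 ?muln1 size_w; lia.
  move/forallP: wg => /(_ v); rewrite -big_distrr.
  have : (g v : nat) < 2 := ltn_ord (g v).
  case: (g v : nat) => [|[|]] //= _ H; rewrite ?muln0 ?muln1; nia.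
apply: leq_trans (gammaw_ub _ _) _; rewrite size_w /=; nia.
Qed.

Lemma part4 (T : finType) (e : rel T) l w (size_w : size w = l.+1)
  (w_noninc : forall i j, i <= j -> j <= l -> nth 0 w j <= nth 0 w i)
  (k : nat) (beta : seq nat) : 0 < k -> size beta = k ->
     (forall j, j < k -> 0 < nth 0 beta j) ->
     k + nth 0 w l <= l * mindeg e -> k < k + nth 0 w l ->
     nth 0 beta 0 <= nth 0 w 0 + k ->
     (forall j, j.+1 < k -> nth 0 beta j.+1 <= nth 0 beta j) ->
     nth 0 w 1 + k <= nth 0 beta k.-1 ->
     gammaw e ((nth 0 w 0 + k) :: beta ++ [seq x + k | x <- behead w])
       <= gammaw e w + k * (#|T| - nuw e w).
Proof.
move=> _ sb _ _ wl _ _ _.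
set wn := _ :: _.
have szn : size wn = (k + l).+1.
  by rewrite /= size_cat sb size_map size_behead size_w.
have nthn0 : nth 0 wn 0 = nth 0 w 0 + k by [].
have nthn : forall j, 0 < j <= l -> nth 0 wn (j + k) = nth 0 w j + k.
  move=> j /andP [j0 jl]; rewrite /wn; case: j j0 jl => // j _ jl.
  rewrite addSn /= nth_cat sb ltnNge leq_addl /= addnK (nth_map 0).
    by rewrite nth_behead.
  by rewrite size_behead size_w.
have wpos : forall j, j <= l -> 0 < nth 0 w j.
  by move=> j jl; have := w_noninc _ _ jl (leqnn l); lia.
case: (gammaw_cases e w) => [[f0 wf0 Eg] | [none Eg]]; last first.
  rewrite /nuw big_pred0 => [|f]; last by rewrite (negbTE (none f)).
  rewrite Eg subn0; apply: leq_trans (gammaw_ub _ _) _; rewrite szn size_w; nia.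
pose A := [pred f : {ffun T -> 'I_(size w)} | wdom e f && (weight f == gammaw e w)].
have A0 : 0 < #|A| by apply/card_gt0P; exists f0; rewrite inE wf0 Eg eqxx.
have [f /andP[wf /eqP wt] En] := @eq_bigmax_cond _ A (fun f => #|V0 f|) A0.
have -> : nuw e w = #|V0 f| by rewrite -En; apply: eq_bigl => g; rewrite inE.
rewrite -wt.
pose h v := if (f v : nat) == 0 then 0 else f v + k.
have hsum : \sum_v h v = weight f + k * (#|T| - #|V0 f|).
  rewrite -(cardsC (V0 f)) addKn -sum_ind big_distrr /weight -big_split /=.
  apply: eq_bigr => v _; rewrite /h !inE.
  by case: eqP => [->|_] /=; rewrite ?muln0 ?muln1.
rewrite -hsum; apply: gammaw_le_fun => v.
  rewrite szn /h; case: ifP => _ //; have := ord_lt (f v) size_w; lia.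
have hge : forall u, (f u : nat) <= h u.
  by move=> u; rewrite /h; case: ifP => [/eqP->|]; lia.
have key : forall j, j <= l -> nth 0 w j <= \sum_(u in nbhd e v) (f u : nat) ->
    nth 0 w j + k <= \sum_(u in nbhd e v) h u.
  move=> j jl Hs; have [u evu fu] := sum_nbhd_pos (leq_trans (wpos j jl) Hs).
  move: Hs; rewrite (bigD1 u) ?inE //= => Hs.
  have hu : h u = f u + k by rewrite /h (negbTE fu).
  rewrite (bigD1 u) ?inE //= hu.
  have : \sum_(i in nbhd e v | i != u) (f i : nat) <= \sum_(i in nbhd e v | i != u) h i.
    by apply: leq_sum => x _; apply: hge.
  move=> H; apply: (@leq_trans (f u + \sum_(i in nbhd e v | i != u) (f i : nat) + k)).
    by rewrite leq_add2r.
  by rewrite addnAC leq_add2l.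
move/forallP: wf => /(_ v) Hv.
have fl : (f v : nat) <= l by have := ord_lt (f v) size_w.
case: (eqVneq (f v : nat) 0) => [fz|fn0].
  have -> : h v = 0 by rewrite /h fz.
  by rewrite nthn0; apply: key => //; move: Hv; rewrite fz.
have -> : h v = f v + k by rewrite /h (negbTE fn0).
by rewrite nthn ?lt0n ?fn0 ?fl //; apply: key.
Qed.

Lemma part6 (T : finType) (e : rel T) (e_sym : symmetric e) l w
  (size_w : size w = l.+1) (w0_pos : 0 < nth 0 w 0)
  (w_noninc : forall i j, i <= j -> j <= l -> nth 0 w j <= nth 0 w i) :
  1 <= mindeg e -> nth 0 w 0 <= l - 1 -> 1 <= nth 0 w (l - 1) ->
  gammaw e (take (l - 1) w ++ [:: 1]) <= gammaw e (take l w ++ [:: 0]).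
Proof.
move=> d1 w0l wl1.
have l2 : 2 <= l by lia.
set w1 := take (l - 1) w ++ _; set w2 := take l w ++ _.
have sz1 : size w1 = l by rewrite size_cat size_takel ?size_w /=; lia.
have sz2 : size w2 = l.+1 by rewrite size_cat size_takel ?size_w /=; lia.
have n1l : nth 0 w1 (l - 1) = 1.
  by rewrite /w1 nth_cat size_takel ?size_w ?ltnn ?subnn //; lia.
have n1 : forall j, j < l -> nth 0 w1 j <= l - 1 /\ nth 0 w1 j <= nth 0 w2 j.
  move=> j jl; case: (ltnP j (l - 1)) => H; last first.
    have ej : j = l - 1 by lia.
    rewrite ej n1l /w2 nth_cat size_takel ?size_w; last lia.
    by rewrite (_ : l - 1 < l) ?nth_take //; lia.
  rewrite /w1 /w2 !nth_cat !size_takel ?size_w; try lia.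
  rewrite H jl !nth_take //; try lia.
  by split => //; have := w_noninc 0 j (leq0n j) (ltnW jl); lia.
case: (gammaw_cases e w2) => [[f wf ->]|[_ ->]]; last first.
  by apply: leq_trans (gammaw_ub _ _) _; rewrite sz1 sz2 leq_mul2l leqnSn orbT.
have fle : forall v, (f v : nat) <= l by move=> v; have := ord_lt (f v) sz2.
have Hv : forall v, nth 0 w2 (f v) <= \sum_(u in nbhd e v) (f u : nat).
  by move=> v; move/forallP: wf.
pose S := [set v | ((f v : nat) == l) && [forall u, e v u ==> ((f u : nat) == 0)]].
pose c v := odflt v [pick u | e v u].
have ec : forall v, e v (c v).
  move=> v; rewrite /c; case: pickP => [u //|none]; exfalso.
  have : #|nbhd e v| = 0 by apply: eq_card0 => u; rewrite inE none.
  by have := mindeg_le e v; lia.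
pose R := c @: S.
have inR : forall u, u \in R -> (f u : nat) = 0 /\ exists2 s, e u s & (f s : nat) = l.
  move=> u /imsetP [s sS ->]; move: sS; rewrite inE => /andP [/eqP fs /forallP H].
  split; first by apply/eqP; apply: (implyP (H (c s))); apply: ec.
  by exists s => //; rewrite e_sym ec.
pose h v := if (f v : nat) == l then l - 1 else if v \in R then 1 else (f v : nat).
have hl : forall v, (f v : nat) = l -> h v = l - 1 by move=> v fv; rewrite /h fv eqxx.
have hR : forall v, v \in R -> h v = 1.
  move=> v vR; have [fv _] := inR v vR; rewrite /h vR fv.
  by case: eqP => //; lia.
have hpos : forall v, (f v : nat) != 0 -> 1 <= h v.
  move=> v fv; rewrite /h; case: ifP => _; first lia.
  by case: ifP => //; rewrite lt0n.
have hge : forall v, (f v : nat) != l -> (f v : nat) <= h v.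
  move=> v fv; rewrite /h (negbTE fv); case: ifP => // vR.
  by have [-> _] := inR v vR.
have hlt : forall v, h v < l.
  move=> v; rewrite /h; case: ifP => [_|fv]; first lia.
  case: ifP => _; first lia.
  have := fle v; move/negbT: fv => /eqP; lia.
apply: (@leq_trans (\sum_v h v)).
  apply: gammaw_le_fun => v; first by rewrite sz1.
  case: (pickP [pred u | e v u && ((f u : nat) == l)]) => [u /andP [evu /eqP fu]| none].
    apply: leq_trans (@sum_nbhd_ge _ _ v u h evu).
    by rewrite (hl u fu); exact: (n1 _ (hlt v)).1.
  have mono : \sum_(u in nbhd e v) (f u : nat) <= \sum_(u in nbhd e v) h u.
    apply: sum_nbhd_mono => u evu; apply: hge.
    by move: (none u); rewrite /= evu /= => /negbT.
  case: (eqVneq (f v : nat) l) => [fv|fv].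
    rewrite hl // n1l.
    case: (boolP (v \in S)) => vS.
      apply: leq_trans (@sum_nbhd_ge _ _ v (c v) h (ec v)).
      by rewrite hR //; apply/imsetP; exists v.
    move: vS; rewrite inE fv eqxx /= => /forallPn [u].
    rewrite negb_imply => /andP [evu fu].
    by apply: leq_trans (@sum_nbhd_ge _ _ v u h evu); apply: hpos.
  have vR : v \notin R.
    apply/negP => vR; have [_ [s evs fs]] := inR v vR.
    by move: (none s); rewrite /= evs fs eqxx.
  have -> : h v = f v by rewrite /h (negbTE fv) (negbTE vR).
  have flt : (f v : nat) < l by have := fle v; rewrite leq_eqVlt (negbTE fv).
  apply: leq_trans (n1 _ flt).2 _.
  exact: leq_trans (Hv v) mono.
pose Vl := [set v | (f v : nat) == l].
have term : forall v, h v + (v \in Vl) <= (f v : nat) + (v \in R).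
  move=> v; rewrite /h inE; case: ifP => [/eqP ->|_] /=; first lia.
  case: ifP => [vR|_]; last lia.
  by have [-> _] := inR v vR.
have Hsum : \sum_v (h v + (v \in Vl)) <= \sum_v ((f v : nat) + (v \in R)).
  by apply: leq_sum => v _; apply: term.
rewrite !big_split /= !sum_ind in Hsum.
have : #|R| <= #|Vl|.
  apply: leq_trans (leq_imset_card _ _) _.
  by apply: subset_leq_card; apply/subsetP => v; rewrite !inE => /andP [->].
rewrite /weight; lia.
Qed.
Theorem theorem13 (T : finType) (e : rel T)
  (e_sym : symmetric e) (e_irr : irreflexive e)
  (l : nat) (w : seq nat) (size_w : size w = l.+1)
  (w0_pos : 0 < nth 0 w 0)
  (w_noninc : forall i j, i <= j -> j <= l -> nth 0 w j <= nth 0 w i) :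
  let delta := mindeg e in
  let n := #|T| in
  (
  (* (i) *)
  (forall i, 1 <= i -> i <= l - 1 -> nth 0 w i <= i * delta ->
     gammaw e w <= gammaw e (take i.+1 w)) /\
  (* (ii) *)
  (forall i, i.+1 <= l -> nth 0 w 0 <= i.+1 ->
     gammaw e (take i.+1 w ++ nseq (l - i) 0) <= i.+1 * domnum e) /\
  (* (iii) *)
  (forall (k i : nat) (w' : seq nat), 0 < k -> 0 < i -> size w' = i.+1 ->
     0 < nth 0 w' 0 -> k * i <= l -> nth 0 w' i <= i * delta ->
     (forall j, j <= i -> nth 0 w (k * j) = k * nth 0 w' j) ->
     gammaw e w <= k * gammaw e w') /\
  (* (iv) *)
  (forall (k : nat) (beta : seq nat), 0 < k -> size beta = k ->
     (forall j, j < k -> 0 < nth 0 beta j) ->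
     k + nth 0 w l <= l * delta -> k < k + nth 0 w l ->
     nth 0 beta 0 <= nth 0 w 0 + k ->
     (forall j, j.+1 < k -> nth 0 beta j.+1 <= nth 0 beta j) ->
     nth 0 w 1 + k <= nth 0 beta k.-1 ->
     gammaw e ((nth 0 w 0 + k) :: beta ++ [seq x + k | x <- behead w])
       <= gammaw e w + k * (n - nuw e w)) /\
  (* (v) *)
  (nth 0 w l <= l * delta -> l <= nth 0 w l -> 2 <= l ->
     gammaw e w <= l * gammaw e [:: nth 0 w 0 - l + 1; nth 0 w l - l + 1]) /\
  (* (vi) *)
  (1 <= delta -> nth 0 w 0 <= l - 1 -> 1 <= nth 0 w (l - 1) ->
     gammaw e (take (l - 1) w ++ [:: 1]) <= gammaw e (take l w ++ [:: 0]))).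
Proof.
move=> delta n.
split; first by move=> i; apply: part1.
split; first by move=> i; apply: part2.
split; first by move=> k i w'; apply: part3.
split; first by move=> k beta; apply: part4.
split; first by move=> _; apply: part5.
exact: part6.
Qed.
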